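(* There is no split graph $(S,K,I)$ such that the factor graph $\Phi(S)$ contains an induced path $v_5v_4v_1v_2v_3$ (on five distinct vertices, in this order along the path) with $\max\{d_i: i\in[5]\}=d_1$.
   Context: A split graph $(S,K,I)$ is a graph $S$ together with a fixed partition $V(S)=K\dot\cup I$, where $K$ is a clique and $I$ is an independent set. For a vertex $v_i$ of $S$, $N_i$ denotes its open neighborhood in $S$ and $d_i=|N_i|$ its degree in $S$; for $u,v$ write $\eta_{uv}=|N_u\cap N_v|$. The factor graph $\Phi(S)$ is the loopless multigraph with vertex set $I$ in which, for distinct $u,v\in I$, there is one edge joining $u$ and $v$ for each 2-switch of $S$ acting on $u$ and $v$ (a 2-switch replaces edges $ab,cd$ with $ac,bd$ when $ab,cd\in E(S)$ and $ac,bd\notin E(S)$); equivalently, the multiplicity of the edge $uv$ is $\sigma_{uv}=(d_u-\eta_{uv})(d_v-\eta_{uv})$, and $u,v$ are adjacent iff $\sigma_{uv}>0$. An induced path in $\Phi(S)$ consists of distinct vertices, consecutive ones adjacent and no other pair adjacent (multiplicities ignored for adjacency). *)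

(* Defs.v *)
From mathcomp Require Import all_boot.
Set Implicit Arguments. Unset Strict Implicit. Unset Printing Implicit Defensive.

Definition simple_graph (T : finType) (e : rel T) : Prop :=
  symmetric e /\ irreflexive e.

Definition split_graph (T : finType) (e : rel T) (K I : {set T}) : Prop :=
  [/\ simple_graph e,
      K :&: I = set0,
      K :|: I = [set: T],
      {in K &, forall x y, x != y -> e x y}
    & {in I &, forall x y, ~~ e x y}].

Section FactorGraph.
Variables (T : finType) (e : rel T).

Definition nbhd (v : T) : {set T} := [set w | e v w].
Definition deg (v : T) : nat := #|nbhd v|.
Definition eta (u v : T) : nat := #|nbhd u :&: nbhd v|.
(* multiplicity of the edge uv in the factor graph *)
Definition sigma (u v : T) : nat := (deg u - eta u v) * (deg v - eta u v).

Definition phi_adj (I : {set T}) (u v : T) : bool :=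
  [&& u \in I, v \in I, u != v & 0 < sigma u v].

Definition phi_induced_path (I : {set T}) (p : seq T) : Prop :=
  [/\ uniq p, all (fun x => x \in I) p &
      forall (x0 : T) (i j : nat), i < j -> j < size p ->
        phi_adj I (nth x0 p i) (nth x0 p j) = (j == i.+1)].
End FactorGraph.

(* Main.v *)
Require Import Defs.
From mathcomp Require Import all_boot.

Lemma sub_eq0 (T : finType) (e : rel T) u v :
  (deg e u - eta e u v == 0) = (nbhd e u \subset nbhd e v).
Proof.
rewrite subn_eq0 /deg /eta.
apply/idP/idP => [H|/setIidPl ->//].
have: nbhd e u :&: nbhd e v == nbhd e u by rewrite eqEcard subsetIl H.
by move/eqP/setIidPl.
Qed.

Lemma adjE (T : finType) (e : rel T) (I : {set T}) u v :
  u \in I -> v \in I -> u != v ->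
  phi_adj e I u v = ~~ (nbhd e u \subset nbhd e v) && ~~ (nbhd e v \subset nbhd e u).
Proof.
move=> hu hv huv; rewrite /phi_adj hu hv huv /= /sigma muln_gt0 !lt0n sub_eq0.
by rewrite /eta setIC sub_eq0.
Qed.

Lemma degsub (T : finType) (e : rel T) u v :
  nbhd e u \subset nbhd e v -> deg e v <= deg e u -> nbhd e v \subset nbhd e u.
Proof.
move=> H1 H2; have: nbhd e u == nbhd e v by rewrite eqEcard H1.
by move/eqP->.
Qed.

Theorem lemma2p3 :
  forall (T : finType) (e : rel T) (K I : {set T}) (v1 v2 v3 v4 v5 : T),
    split_graph e K I ->
    phi_induced_path e I [:: v5; v4; v1; v2; v3] ->
    (forall x, x \in [:: v1; v2; v3; v4; v5] -> deg e x <= deg e v1) ->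
    False.
Proof.
move=> T e K I v1 v2 v3 v4 v5 _ [hu hall hp] hd.
move: hall => /= /and5P [i5 i4 i1 i2 /andP [i3 _]].
move: hu; rewrite /= !inE !negb_or => /and5P [/and4P [n54 n51 n52 n53] /and3P [n41 n42 n43]
  /andP [n12 n13] n23 _].
have a := hp v1.
have a54 := a 0 1 erefl erefl; have a51 := a 0 2 erefl erefl.
have a52 := a 0 3 erefl erefl; have a41 := a 1 2 erefl erefl.
have a42 := a 1 3 erefl erefl; have a43 := a 1 4 erefl erefl.
have a12 := a 2 3 erefl erefl; have a13 := a 2 4 erefl erefl.
have a23 := a 3 4 erefl erefl.
move: a54 a51 a52 a41 a42 a43 a12 a13 a23 => /=.
rewrite !adjE // => a54 a51 a52 a41 a42 a43 a12 a13 a23.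
have d3 : deg e v3 <= deg e v1 by apply: hd; rewrite !inE eqxx !orbT.
have d5 : deg e v5 <= deg e v1 by apply: hd; rewrite !inE eqxx !orbT.
have s31 : nbhd e v3 \subset nbhd e v1.
  by case/nandP: (negbT a13) => /negbNE h; [exact: degsub h d3|].
have s51 : nbhd e v5 \subset nbhd e v1.
  by case/nandP: (negbT a51) => /negbNE h; [|exact: degsub h d5].
have s34 : nbhd e v3 \subset nbhd e v4.
  case/nandP: (negbT a43) => /negbNE h //.
  by move: a41; rewrite (subset_trans h s31).
have s52 : nbhd e v5 \subset nbhd e v2.
  case/nandP: (negbT a52) => /negbNE h //.
  by move: a12; rewrite (subset_trans h s51) andbF.
case/nandP: (negbT a42) => /negbNE h.
  by move: a23; rewrite (subset_trans s34 h) andbF.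
by move: a54; rewrite (subset_trans s52 h).
Qed.
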